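(* Let $z\in V^k(\mathfrak g)$ be a PBW monomial $z=z^{(+)}z^{(-)}z^{(0)}\mathbf 1$ (notation as in the context). Then $\tilde L_{-1}z$ is a linear combination of PBW monomials $x=x^{(+)}x^{(-)}x^{(0)}\mathbf 1$ each satisfying all of: (a) $\deg(x^{(+)})\le\deg(z^{(+)})+1$ and $\deg(x^{(0)})\le\deg(z^{(0)})+1$; (b) if $z^{(-)}\neq1$ then $x^{(-)}\neq1$; (c) if $x^{(-)}=z^{(-)}$, then either $\deg(x^{(0)})=\deg(z^{(0)})+1$ or $x^{(0)}=z^{(0)}$; (d) if $\deg(x^{(0)})=\deg(z^{(0)})+1$, then $x^{(-)}=z^{(-)}$ and $\deg(x^{(+)})\le\deg(z^{(+)})$.
   Context: $\mathfrak g$ is a complex simple Lie algebra of rank $\ell$ with triangular decomposition $\mathfrak n_-\oplus\mathfrak h\oplus\mathfrak n_+$, positive roots $\Delta_+=\{\beta_1,\dots,\beta_q\}$ ordered so that $\mathrm{ht}(\beta_i)\le\mathrm{ht}(\beta_j)$ for $i<j$, and basis $\{u^i,e_{\beta_j},f_{\beta_j}\}$ with $\{u^i\}_{i=1}^\ell$ orthonormal in $\mathfrak h$ for the normalized invariant form $(\cdot|\cdot)$ and $(e_{\beta_j}|f_{\beta_j})=1$. $V^k(\mathfrak g)\cong U(t^{-1}\mathfrak g[t^{-1}])$ is the universal affine vertex algebra at level $k\neq-h^\vee$, $x(n)=x\otimes t^n$. A PBW monomial is $\mathbf 1$ or an element $z=z^{(+)}z^{(-)}z^{(0)}\mathbf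 1$ with $z^{(+)}=\prod_{j=1}^q\prod_{s} e_{\beta_j}(-s)^{a_{j,s}}$, $z^{(-)}=\prod_{j=1}^q\prod_s f_{\beta_j}(-s)^{b_{j,s}}$, $z^{(0)}=\prod_{i=1}^\ell\prod_s u^i(-s)^{c_{i,s}}$ (products in the fixed order $j=1,\dots,q$, $s=1,2,\dots$; $s\ge1$; exponents nonnegative integers); these form a basis of $V^k(\mathfrak g)$. $\deg$ of such a factor is the total number of factors (sum of exponents). $\tilde L_{-1}:=\frac{1}{k+h^\vee}\big(\sum_{i=1}^\ell u^i(-1)u^i(0)+\sum_{\alpha\in\Delta_+}e_\alpha(-1)f_\alpha(0)\big)$, acting on $V^k(\mathfrak g)$ by left multiplication. *)

(* Defs.v *)
From HB Require Import structures.
From mathcomp Require Import all_boot all_algebra.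
From mathcomp Require Import complex.
From mathcomp Require Import reals.

Set Implicit Arguments.
Unset Strict Implicit.
Unset Printing Implicit Defensive.

Import GRing.Theory.
Local Open Scope ring_scope.

(*   beta j i  stands for  beta_j(u^i).                                      *)

Section LieAlgebra.
Variables (F : fieldType) (g : vectType F).

Definition is_lie_bracket (br : g -> g -> g) : Prop :=
  [/\ forall (a : F) x y z, br (a *: x + y) z = a *: br x z + br y z,
      forall (a : F) x y z, br z (a *: x + y) = a *: br z x + br z y,
      forall x, br x x = 0 &
      forall x y z, br x (br y z) + br y (br z x) + br z (br x y) = 0].

Definition lie_ideal (br : g -> g -> g) (I : {vspace g}) : Prop :=
  forall x y, y \in I -> br x y \in I.

Definition simple_lie (br : g -> g -> g) : Prop :=
  is_lie_bracket br /\
  (exists x y, br x y != 0) /\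
  (forall I : {vspace g}, lie_ideal br I -> I = 0%VS \/ I = fullv).

Definition invariant_form (br : g -> g -> g) (frm : g -> g -> F) : Prop :=
  [/\ forall (a : F) x y z, frm (a *: x + y) z = a * frm x z + frm y z,
      forall x y, frm x y = frm y x,
      forall x, (forall y, frm x y = 0) -> x = 0 &
      forall x y z, frm (br x y) z = frm x (br y z)].

End LieAlgebra.

Section RootData.
Variables (F : fieldType) (ell q : nat).

(* Delta_+ = {beta_1, ..., beta_q} is a positive system: there are ell of
   the beta_j (the simple roots  beta_(alpha r), r < ell) such that every
   beta_j = \sum_r cf j r * beta_(alpha r) with nonnegative integers cf j r;
   the height is  ht(beta_j) = \sum_r cf j r.  We require
   ht(beta_i) <= ht(beta_j) for i < j, and the normalization of the form:
   (theta|theta) = 2 for the highest root theta (the root of maximal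
   height), where the form induced on h^* is computed in the orthonormal
   basis u^i : (lambda|mu) = \sum_i lambda(u^i) mu(u^i). *)
Definition positive_system_by_height (beta : 'I_q -> 'I_ell -> F) : Prop :=
  exists (alpha : 'I_ell -> 'I_q) (cf : 'I_q -> 'I_ell -> nat),
    let ht j := (\sum_(r < ell) cf j r)%N in
    [/\ forall j i, beta j i = \sum_(r < ell) (cf j r)%:R * beta (alpha r) i,
        forall i j : 'I_q, (i < j)%N -> (ht i <= ht j)%N &
        forall j : 'I_q, (forall j', (ht j' <= ht j)%N) ->
          \sum_(i < ell) beta j i ^+ 2 = 2].

End RootData.

Section SimpleLieSetup.
Variables (F : fieldType) (g : vectType F) (ell q : nat).

Definition simple_lie_setup (br : g -> g -> g) (frm : g -> g -> F)
    (u : 'I_ell -> g) (e f : 'I_q -> g) (beta : 'I_q -> 'I_ell -> F) : Prop :=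
  [/\ simple_lie br /\ invariant_form br frm,
      basis_of fullv ([seq u i | i <- enum 'I_ell] ++ [seq e j | j <- enum 'I_q]
                        ++ [seq f j | j <- enum 'I_q]),
      [/\ forall i i', br (u i) (u i') = 0,
          forall i j, br (u i) (e j) = beta j i *: e j,
          forall i j, br (u i) (f j) = - beta j i *: f j &
          forall j, (exists i, beta j i != 0)] &
      positive_system_by_height beta /\
      ((forall i i', frm (u i) (u i') = (i == i')%:R) /\
       (forall j, frm (e j) (f j) = 1))].

(* The dual Coxeter number h^vee: the Casimir element of the normalized form
   (dual bases  u^i <-> u^i,  e_beta <-> f_beta) acts on the adjoint
   representation by the scalar 2 h^vee. *)
Definition dual_coxeter (br : g -> g -> g) (u : 'I_ell -> g) (e f : 'I_q -> g)
    (hv : F) : Prop :=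
  forall y, \sum_(i < ell) br (u i) (br (u i) y)
            + \sum_(j < q) (br (e j) (br (f j) y) + br (f j) (br (e j) y))
          = (2 * hv) *: y.

End SimpleLieSetup.

(*   A letter is a factor e_{beta_j}(-s) (inl (inl (j,s))),                   *)
(*   f_{beta_j}(-s) (inl (inr (j,s))) or u^i(-s) (inr (i,s)).                 *)
(*   A PBW monomial is a sorted list of letters (with s >= 1) in the fixed    *)
(*   order: all e's, then all f's, then all u's; within each block by index,  *)
(*   then by s.  Repetitions encode exponents.  The empty list is  1.         *)

Definition letter (ell q : nat) : Type := ('I_q * nat + 'I_q * nat + 'I_ell * nat)%type.

Section PBW.
Variables (ell q : nat).

Definition is_E (l : letter ell q) : bool :=
  if l is inl (inl _) then true else false.
Definition is_F (l : letter ell q) : bool :=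
  if l is inl (inr _) then true else false.
Definition is_U (l : letter ell q) : bool :=
  if l is inr _ then true else false.

Definition letter_s (l : letter ell q) : nat :=
  match l with inl (inl (_, s)) => s | inl (inr (_, s)) => s | inr (_, s) => s end.

Definition letter_key (l : letter ell q) : nat * nat * nat :=
  match l with
  | inl (inl (j, s)) => (0%N, nat_of_ord j, s)
  | inl (inr (j, s)) => (1%N, nat_of_ord j, s)
  | inr (i, s) => (2%N, nat_of_ord i, s)
  end.

Definition letter_le (l1 l2 : letter ell q) : bool :=
  let: (a1, b1, c1) := letter_key l1 in
  let: (a2, b2, c2) := letter_key l2 in
  [|| (a1 < a2)%N, (a1 == a2) && (b1 < b2)%N
    | [&& a1 == a2, b1 == b2 & (c1 <= c2)%N]].

Definition pbw (m : seq (letter ell q)) : bool :=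
  sorted letter_le m && all (fun l => 0 < letter_s l)%N m.

(* the three factors z^(+), z^(-), z^(0) of a monomial, and deg = length *)
Definition pbw_plus  (m : seq (letter ell q)) := filter is_E m.
Definition pbw_minus (m : seq (letter ell q)) := filter is_F m.
Definition pbw_zero  (m : seq (letter ell q)) := filter is_U m.

Definition lemma3p2_conditions (z x : seq (letter ell q)) : Prop :=
  [/\
      (size (pbw_plus x) <= size (pbw_plus z) + 1)%N /\
      (size (pbw_zero x) <= size (pbw_zero z) + 1)%N,
      pbw_minus z != [::] -> pbw_minus x != [::],
      pbw_minus x = pbw_minus z ->
        size (pbw_zero x) = (size (pbw_zero z) + 1)%N \/ pbw_zero x = pbw_zero z &
      size (pbw_zero x) = (size (pbw_zero z) + 1)%N ->
        pbw_minus x = pbw_minus z /\ (size (pbw_plus x) <= size (pbw_plus z))%N].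

End PBW.

(* Part 3. The universal affine vertex algebra V^k(g) as a module over the   *)
(*   affine Lie algebra:  act x n  is the action of  x(n) = x (x) t^n,       *)
(*   vac is the vacuum 1.  V^k(g) = U(ghat) (x)_{U(g[t] + CK)} C_k is        *)
(*   characterized (up to isomorphism) by: the ghat commutation relations    *)
(*   with K = k, x(n) 1 = 0 for n >= 0, and the PBW monomials applied to 1   *)
(*   form a basis.                                                           *)

Section Affine.
Variables (F : fieldType) (g : vectType F) (ell q : nat).
Variables (u : 'I_ell -> g) (e f : 'I_q -> g).
Variables (V : lmodType F) (vac : V) (act : g -> int -> V -> V).

Definition letter_vec (l : letter ell q) : g :=
  match l with inl (inl (j, _)) => e j | inl (inr (j, _)) => f j | inr (i, _) => u i end.

Definition letter_mode (l : letter ell q) : int := - (letter_s l)%:Z.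

Definition pbw_eval (m : seq (letter ell q)) : V :=
  foldr (fun l v => act (letter_vec l) (letter_mode l) v) vac m.

Definition pbw_lin_comb (P : seq (letter ell q) -> Prop) (v : V) : Prop :=
  exists s : seq (F * seq (letter ell q)),
    (forall p, p \in s -> pbw p.2 /\ P p.2) /\
    v = \sum_(p <- s) p.1 *: pbw_eval p.2.

Definition universal_affine_VA (br : g -> g -> g) (frm : g -> g -> F) (k : F)
  : Prop :=
  [/\ forall (a : F) x y n v, act (a *: x + y) n v = a *: act x n v + act y n v,
      forall x n (a : F) v w, act x n (a *: v + w) = a *: act x n v + act x n w,
      forall x y (m n : int) v,
        act x m (act y n v) - act y n (act x m v)
        = act (br x y) (m + n) v
          + (if m + n == 0 then (m%:~R * frm x y * k) *: v else 0),
      forall x (n : int), 0 <= n -> act x n vac = 0 &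
      (forall v, pbw_lin_comb (fun _ => True) v) /\
      (forall s : seq (F * seq (letter ell q)),
          (forall p, p \in s -> pbw p.2) -> uniq (map snd s) ->
          \sum_(p <- s) p.1 *: pbw_eval p.2 = 0 ->
          forall p, p \in s -> p.1 = 0)].

Definition tildeL_m1 (k hv : F) (v : V) : V :=
  (k + hv)^-1 *: (\sum_(i < ell) act (u i) (-1) (act (u i) 0 v)
                  + \sum_(j < q) act (e j) (-1) (act (f j) 0 v)).

End Affine.

(* Main.v *)
Require Import Defs.
From HB Require Import structures.
From mathcomp Require Import all_boot all_algebra.
From mathcomp Require Import complex.
From mathcomp Require Import reals.

Set Implicit Arguments.
Unset Strict Implicit.
Unset Printing Implicit Defensive.
Import GRing.Theory.
Local Open Scope ring_scope.
Notation kind ell q := (('I_q + 'I_q + 'I_ell)%type).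

Section Comb.
Variables (ell q : nat).
Notation letter := (letter ell q).
Notation le := (@letter_le ell q).
Implicit Types (l b : letter) (x w A : seq letter).

Definition mk (k : kind ell q) (s : nat) : letter :=
  match k with inl (inl j) => inl (inl (j, s)) | inl (inr j) => inl (inr (j, s))
  | inr i => inr (i, s) end.
Definition kindof (l : letter) : kind ell q :=
  match l with inl (inl (j, _)) => inl (inl j) | inl (inr (j, _)) => inl (inr j)
  | inr (i, _) => inr i end.
Definition kE (k : kind ell q) := if k is inl (inl _) then true else false.
Definition kF (k : kind ell q) := if k is inl (inr _) then true else false.
Definition kU (k : kind ell q) := if k is inr _ then true else false.

Lemma mk_s k s : letter_s (mk k s) = s. Proof. by case: k => [[]|]. Qed.
Lemma mk_kindof l : mk (kindof l) (letter_s l) = l. Proof. by case: l => [[[]|[]]|[]]. Qed.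
Lemma is_E_mk k s : is_E (mk k s) = kE k. Proof. by case: k => [[]|]. Qed.
Lemma is_F_mk k s : is_F (mk k s) = kF k. Proof. by case: k => [[]|]. Qed.
Lemma is_U_mk k s : is_U (mk k s) = kU k. Proof. by case: k => [[]|]. Qed.
Lemma kE_kindof l : kE (kindof l) = is_E l. Proof. by case: l => [[[]|[]]|[]]. Qed.
Lemma kF_kindof l : kF (kindof l) = is_F l. Proof. by case: l => [[[]|[]]|[]]. Qed.
Lemma kU_kindof l : kU (kindof l) = is_U l. Proof. by case: l => [[[]|[]]|[]]. Qed.

Definition rank (l : letter) : nat := (letter_key l).1.1.
Lemma rankE l : rank l = if is_E l then 0%N else if is_F l then 1%N else 2%N.
Proof. by case: l => [[[]|[]]|[]]. Qed.
Lemma type_cases l : [|| is_E l, is_F l | is_U l].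
Proof. by case: l => [[[]|[]]|[]]. Qed.
Lemma EnF l : is_E l -> is_F l = false. Proof. by case: l => [[[]|[]]|[]]. Qed.
Lemma EnU l : is_E l -> is_U l = false. Proof. by case: l => [[[]|[]]|[]]. Qed.
Lemma FnU l : is_F l -> is_U l = false. Proof. by case: l => [[[]|[]]|[]]. Qed.
Lemma FnE l : is_F l -> is_E l = false. Proof. by case: l => [[[]|[]]|[]]. Qed.
Lemma UnE l : is_U l -> is_E l = false. Proof. by case: l => [[[]|[]]|[]]. Qed.
Lemma UnF l : is_U l -> is_F l = false. Proof. by case: l => [[[]|[]]|[]]. Qed.

Lemma le_rank l1 l2 : letter_le l1 l2 -> (rank l1 <= rank l2)%N.
Proof.
rewrite /letter_le /rank; case: (letter_key l1) => [[a1 b1] c1].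
case: (letter_key l2) => [[a2 b2] c2] /=.
by case/or3P => [/ltnW//|/andP[/eqP->]|/and3P[/eqP->]].
Qed.

Lemma lt_rank_le l1 l2 : (rank l1 < rank l2)%N -> letter_le l1 l2.
Proof.
rewrite /letter_le /rank; case: (letter_key l1) => [[a1 b1] c1].
by case: (letter_key l2) => [[a2 b2] c2] /= ->.
Qed.

Lemma letter_le_total l1 l2 : letter_le l1 l2 || letter_le l2 l1.
Proof.
rewrite /letter_le; case: (letter_key l1) => [[a1 b1] c1].
case: (letter_key l2) => [[a2 b2] c2].
case: (ltngtP a1 a2) => //= _.
case: (ltngtP b1 b2) => //= _.
exact: leq_total.
Qed.

Lemma sorted_rank (s : seq letter) : sorted le s -> sorted leq (map rank s).
Proof.
elim: s => //= a s IH; case: s IH => //= b s IH /andP[Hab Hs].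
by rewrite le_rank //=; apply: IH.
Qed.

Lemma sorted_split_rank (A w : seq letter) l : sorted le (A ++ l :: w) ->
  (forall a, a \in A -> rank a <= rank l)%N /\ (forall b, b \in w -> rank l <= rank b)%N.
Proof.
move/sorted_rank; rewrite (sorted_pairwise leq_trans) map_cat pairwise_cat /=.
case/and3P=> /allrelP H1 _ /andP[/allP H2 _]; split.
  by move=> a aA; apply: H1; rewrite ?map_f ?mem_head.
by move=> b bw; apply: H2; rewrite map_f.
Qed.

Definition sd (w : seq letter) : nat := sumn (map (@letter_s ell q) w).
Lemma sd_cat w1 w2 : sd (w1 ++ w2) = (sd w1 + sd w2)%N.
Proof. by rewrite /sd map_cat sumn_cat. Qed.
Lemma sd_cons l w : sd (l :: w) = (letter_s l + sd w)%N. Proof. by []. Qed.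
Lemma sd_perm w1 w2 : perm_eq w1 w2 -> sd w1 = sd w2.
Proof. by move=> H; rewrite /sd; apply: perm_sumn; apply: perm_map. Qed.

Definition pos (l : letter) := (0 < letter_s l)%N.

Lemma pbw_cons l w : pbw (l :: w) -> pbw w.
Proof. by rewrite /pbw /= => /andP[/path_sorted -> /andP[_ ->]]. Qed.

Lemma filter_nil (p : pred letter) x : (forall b, b \in x -> p b = false) -> filter p x = [::].
Proof.
elim: x => //= a x IH H; rewrite H ?mem_head // IH // => b bx.
by apply: H; rewrite inE bx orbT.
Qed.

Lemma sorted_split x : sorted le x ->
  x = pbw_plus x ++ pbw_minus x ++ pbw_zero x.
Proof.
elim: x => //= l x IH Hs.
have Hx : sorted le x by apply: path_sorted Hs.
have Hr : forall b, b \in x -> (rank l <= rank b)%N.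
  by case: (@sorted_split_rank [::] x l Hs).
rewrite {1}(IH Hx) /pbw_plus /pbw_minus /pbw_zero /=.
case: (or3P (type_cases l)) => H.
- by rewrite H (EnF H) (EnU H).
- rewrite H (FnE H) (FnU H) /= (@filter_nil (@is_E ell q)) // => b bx.
  by move: (Hr b bx); rewrite !rankE H (FnE H); case: ifP.
- rewrite (UnE H) (UnF H) H /= (@filter_nil (@is_E ell q)) ?(@filter_nil (@is_F ell q)) // => b bx;
  by move: (Hr b bx); rewrite !rankE (UnE H) (UnF H); case: ifP => //; case: ifP.
Qed.

End Comb.
Section Alg.
Variables (F : fieldType) (g : vectType F) (ell q : nat).
Variables (br : g -> g -> g) (frm : g -> g -> F) (kk : F).
Variables (u : 'I_ell -> g) (e f : 'I_q -> g) (beta : 'I_q -> 'I_ell -> F).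
Variables (V : lmodType F) (vac : V) (act : g -> int -> V -> V).

Notation letter := (letter ell q).
Notation le := (@letter_le ell q).
Notation eval := (pbw_eval u e f vac act).
Notation W := (pbw_lin_comb u e f vac act).
Notation vecl := (letter_vec u e f).
Notation pbw := (@pbw ell q).
Notation posl := (@pos ell q).
Implicit Types (l : letter) (A : seq letter).

Definition kvec (k : kind ell q) : g := vecl (mk k 0).
Lemma vecl_mk k s : vecl (mk k s) = kvec k. Proof. by case: k => [[]|]. Qed.
Lemma vecl_kindof l : vecl l = kvec (kindof l). Proof. by case: l => [[[]|[]]|[]]. Qed.

Definition pre A v := foldr (fun l v => act (vecl l) (letter_mode l) v) v A.
Lemma eval_cat A x : eval (A ++ x) = pre A (eval x).
Proof. by rewrite /pbw_eval foldr_cat. Qed.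
Lemma eval_cons l x : eval (l :: x) = act (vecl l) (letter_mode l) (eval x).
Proof. by []. Qed.

Lemma dbl0 (M : zmodType) (v : M) : v = v + v -> v = 0.
Proof. by move/(congr1 (fun t => t - v)); rewrite subrr addrK. Qed.

Lemma W0 P : W P 0.
Proof. by exists [::]; split => //; rewrite big_nil. Qed.

Lemma WD P v1 v2 : W P v1 -> W P v2 -> W P (v1 + v2).
Proof.
move=> [s1 [H1 ->]] [s2 [H2 ->]]; exists (s1 ++ s2); split; last by rewrite big_cat.
by move=> p; rewrite mem_cat => /orP[/H1|/H2].
Qed.

Lemma WZ P a v : W P v -> W P (a *: v).
Proof.
move=> [s [H ->]]; exists [seq (a * p.1, p.2) | p <- s]; split.
  by move=> p /mapP[p' /H Hp ->].
by rewrite big_map scaler_sumr; apply: eq_bigr => p _; rewrite scalerA.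
Qed.

Lemma Wsum P (I : Type) (r : seq I) (Q : pred I) (G : I -> V) :
  (forall i, Q i -> W P (G i)) -> W P (\sum_(i <- r | Q i) G i).
Proof.
move=> H; elim/big_rec: _ => [|i v Qi Hv]; first exact: W0.
by apply: WD => //; apply: H.
Qed.

Lemma Wmono (P P' : seq letter -> Prop) v :
  (forall x, pbw x -> P x -> P' x) -> W P v -> W P' v.
Proof.
move=> HP [s [H ->]]; exists s; split => // p /H [H1 H2]; split => //; exact: HP.
Qed.

Lemma Weval (P : seq letter -> Prop) x : pbw x -> P x -> W P (eval x).
Proof.
move=> H1 H2; exists [:: (1, x)]; split; first by move=> p; rewrite inE => /eqP->.
by rewrite big_seq1 scale1r.
Qed.

Lemma Wlin (phi : V -> V) (P P' : seq letter -> Prop) v :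
  (forall a v1 v2, phi (a *: v1 + v2) = a *: phi v1 + phi v2) ->
  (forall x, pbw x -> P x -> W P' (phi (eval x))) -> W P v -> W P' (phi v).
Proof.
move=> Hl H [s [Hs ->]].
have phi0 : phi 0 = 0.
  have H0 := Hl 1 0 0; rewrite !scale1r addr0 in H0; exact: dbl0 H0.
elim: s Hs => [|p s IH] Hs; first by rewrite big_nil phi0; apply: W0.
rewrite big_cons Hl; apply: WD.
  by apply: WZ; case: (Hs p (mem_head _ _)) => ? ?; apply: H.
by apply: IH => p' Hp'; apply: Hs; rewrite inE Hp' orbT.
Qed.

Hypothesis HactLg : forall (a : F) x y n v, act (a *: x + y) n v = a *: act x n v + act y n v.
Hypothesis HactLv : forall x n (a : F) v w, act x n (a *: v + w) = a *: act x n v + act x n w.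

Lemma act0v x n : act x n 0 = 0.
Proof.
have H0 := HactLv x n 1 0 0; rewrite !scale1r addr0 in H0; exact: dbl0 H0.
Qed.
Lemma act0g n v : act 0 n v = 0.
Proof.
have H0 := HactLg 1 0 0 n v; rewrite !scale1r addr0 in H0; exact: dbl0 H0.
Qed.
Lemma actDv x n v w : act x n (v + w) = act x n v + act x n w.
Proof. by have := HactLv x n 1 v w; rewrite !scale1r => ->. Qed.
Lemma actZv x n a v : act x n (a *: v) = a *: act x n v.
Proof. by have := HactLv x n a v 0; rewrite !addr0 act0v addr0 => ->. Qed.
Lemma actDg x y n v : act (x + y) n v = act x n v + act y n v.
Proof. by have := HactLg 1 x y n v; rewrite !scale1r => ->. Qed.
Lemma actZg x n a v : act (a *: x) n v = a *: act x n v.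
Proof. by have := HactLg a x 0 n v; rewrite !addr0 act0g addr0 => ->. Qed.
Lemma act_sumg (I : Type) (r : seq I) (Q : pred I) (G : I -> g) n v :
  act (\sum_(i <- r | Q i) G i) n v = \sum_(i <- r | Q i) act (G i) n v.
Proof.
elim/big_rec2: _ => [|i y1 y2 _ <-]; first exact: act0g.
by rewrite actDg.
Qed.
Lemma act_sumv x n (I : Type) (r : seq I) (Q : pred I) (G : I -> V) :
  act x n (\sum_(i <- r | Q i) G i) = \sum_(i <- r | Q i) act x n (G i).
Proof.
elim/big_rec2: _ => [|i y1 y2 _ <-]; first exact: act0v.
by rewrite actDv.
Qed.

Lemma pre_lin A a v1 v2 : pre A (a *: v1 + v2) = a *: pre A v1 + pre A v2.
Proof. by elim: A => //= l A ->; rewrite HactLv. Qed.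
Lemma pre0 A : pre A 0 = 0.
Proof. by elim: A => //= l A ->; rewrite act0v. Qed.
Lemma pre_sum A (I : Type) (r : seq I) (Q : pred I) (G : I -> V) :
  pre A (\sum_(i <- r | Q i) G i) = \sum_(i <- r | Q i) pre A (G i).
Proof.
elim/big_rec2: _ => [|i y1 y2 _ <-]; first exact: pre0.
by have := pre_lin A 1 (G i) y2; rewrite !scale1r => ->.
Qed.
Lemma pre_scale A a v : pre A (a *: v) = a *: pre A v.
Proof. by have := pre_lin A a v 0; rewrite !addr0 pre0 addr0 => ->. Qed.

Lemma actlin x n : forall a v1 v2, act x n (a *: v1 + v2) = a *: act x n v1 + act x n v2.
Proof. exact: HactLv. Qed.

Hypothesis Hbr : is_lie_bracket br.

Lemma brl a x y z : br (a *: x + y) z = a *: br x z + br y z.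
Proof. by case: Hbr. Qed.
Lemma brr a x y z : br z (a *: x + y) = a *: br z x + br z y.
Proof. by case: Hbr. Qed.
Lemma brxx x : br x x = 0. Proof. by case: Hbr. Qed.
Lemma br0r z : br z 0 = 0.
Proof.
have H0 := brr 1 0 0 z; rewrite !scale1r addr0 in H0; exact: dbl0 H0.
Qed.
Lemma br0l z : br 0 z = 0.
Proof.
have H0 := brl 1 0 0 z; rewrite !scale1r addr0 in H0; exact: dbl0 H0.
Qed.
Lemma brDr z x y : br z (x + y) = br z x + br z y.
Proof. by have := brr 1 x y z; rewrite !scale1r => ->. Qed.
Lemma brDl z x y : br (x + y) z = br x z + br y z.
Proof. by have := brl 1 x y z; rewrite !scale1r => ->. Qed.
Lemma brZr z a x : br z (a *: x) = a *: br z x.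
Proof. by have := brr a x 0 z; rewrite !addr0 br0r addr0 => ->. Qed.
Lemma brZl z a x : br (a *: x) z = a *: br x z.
Proof. by have := brl a x 0 z; rewrite !addr0 br0l addr0 => ->. Qed.
Lemma br_sumr z (I : Type) (r : seq I) (Q : pred I) (G : I -> g) :
  br z (\sum_(i <- r | Q i) G i) = \sum_(i <- r | Q i) br z (G i).
Proof.
elim/big_rec2: _ => [|i y1 y2 _ <-]; first exact: br0r.
by rewrite brDr.
Qed.
Lemma br_suml z (I : Type) (r : seq I) (Q : pred I) (G : I -> g) :
  br (\sum_(i <- r | Q i) G i) z = \sum_(i <- r | Q i) br (G i) z.
Proof.
elim/big_rec2: _ => [|i y1 y2 _ <-]; first exact: br0l.
by rewrite brDl.
Qed.
Lemma brN x y : br x y = - br y x.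
Proof.
have := brxx (x + y); rewrite brDl !brDr !brxx add0r addr0 => /eqP.
by rewrite addr_eq0 => /eqP.
Qed.
Lemma brNr z x : br z (- x) = - br z x.
Proof. by rewrite -scaleN1r brZr scaleN1r. Qed.
Lemma br_der x y z : br x (br y z) = br (br x y) z + br y (br x z).
Proof.
case: Hbr => _ _ _ /(_ x y z) J.
rewrite (brN z x) (brN z (br x y)) brNr in J.
move/eqP: J; rewrite -addrA addr_eq0 opprD !opprK => /eqP ->.
by rewrite addrC.
Qed.



Hypothesis Hbasis : basis_of fullv ([seq u i | i <- enum 'I_ell] ++
   [seq e j | j <- enum 'I_q] ++ [seq f j | j <- enum 'I_q]).
Let X := [seq u i | i <- enum 'I_ell] ++ [seq e j | j <- enum 'I_q] ++ [seq f j | j <- enum 'I_q].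
Definition kenum : seq (kind ell q) := [seq inr i | i <- enum 'I_ell] ++
   [seq inl (inl j) | j <- enum 'I_q] ++ [seq inl (inr j) | j <- enum 'I_q].
Lemma X_map : X = map kvec kenum.
Proof. by rewrite /X /kenum !map_cat -!map_comp. Qed.

Lemma kenum_uniq : uniq kenum.
Proof.
have U1 : uniq [seq (inr i : kind ell q) | i <- enum 'I_ell].
  by rewrite map_inj_uniq ?enum_uniq // => a b [].
have U2 : uniq [seq (inl (inl j) : kind ell q) | j <- enum 'I_q].
  by rewrite map_inj_uniq ?enum_uniq // => a b [].
have U3 : uniq [seq (inl (inr j) : kind ell q) | j <- enum 'I_q].
  by rewrite map_inj_uniq ?enum_uniq // => a b [].
rewrite /kenum !cat_uniq U1 U2 U3 /= andbT.
apply/andP; split; apply/hasPn => k.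
  by rewrite mem_cat => /orP [] /mapP [j _ ->]; apply/mapP => -[i _].
by move=> /mapP [j _ ->]; apply/mapP => -[i _].
Qed.

Lemma kenum_all k : k \in kenum.
Proof.
rewrite /kenum !mem_cat; case: k => [[j|j]|i].
- by rewrite (map_f (fun j => inl (inl j))) ?mem_enum ?orbT.
- by rewrite (map_f (fun j => inl (inr j))) ?mem_enum ?orbT.
- by rewrite (map_f inr) ?mem_enum.
Qed.

Lemma sumX (M : nmodType) (G : g -> M) :
  \sum_(b <- X) G b = \sum_(k : kind ell q) G (kvec k).
Proof.
rewrite X_map big_map (perm_big (index_enum (kind ell q))) //.
apply: uniq_perm; rewrite ?index_enum_uniq ?kenum_uniq // => k.
by rewrite kenum_all mem_index_enum.
Qed.

Lemma uniq_map_inj (T1 T2 : eqType) (h : T1 -> T2) (s : seq T1) :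
  uniq (map h s) -> {in s &, injective h}.
Proof.
move=> /uniqP U a b As Bs Eq.
have Ha : (index a s < size (map h s))%N by rewrite size_map index_mem.
have Hb : (index b s < size (map h s))%N by rewrite size_map index_mem.
have := U (h a) _ _ Ha Hb.
rewrite !(nth_map a) ?index_mem // (nth_index a As) (nth_index a Bs) Eq => /(_ erefl) Ei.
by rewrite -(nth_index a As) Ei nth_index.
Qed.

Lemma kvec_inj : injective kvec.
Proof.
move=> a b Eq; have U : uniq (map kvec kenum) by rewrite -X_map; apply: free_uniq; apply: basis_free Hbasis.
by apply: (uniq_map_inj U) => //; apply: kenum_all.
Qed.

Lemma expand (x : g) : exists c : kind ell q -> F, x = \sum_k c k *: kvec k.
Proof.
have Hx : x \in <<X>>%VS by rewrite (span_basis Hbasis) memvf.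
case: (free_span (basis_free Hbasis) Hx) => c Hc _.
by exists (fun k => c (kvec k)); rewrite Hc sumX.
Qed.

Lemma expand_uniq (c : kind ell q -> F) : \sum_k c k *: kvec k = 0 -> forall k, c k = 0.
Proof.
move=> H k.
pose k1 b := oapp c 0 [pick k' | kvec k' == b].
have Hk1 : forall k', k1 (kvec k') = c k'.
  move=> k'; rewrite /k1; case: pickP => [k2 /eqP /kvec_inj -> //|/(_ k')].
  by rewrite eqxx.
have H0 : (0 : g) \in <<X>>%VS by rewrite mem0v.
case: (free_span (basis_free Hbasis) H0) => c0 _ Hu.
have E1 := Hu k1.
have E2 := Hu (fun _ => 0).
have kX : kvec k \in X by rewrite X_map map_f ?kenum_all.
have E2' : c0 (kvec k) = 0.
  by rewrite -(E2 _ (kvec k) kX) // big1 // => b _; rewrite scale0r.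
rewrite -Hk1 (E1 _ (kvec k) kX) //.
by rewrite sumX; under eq_bigr do rewrite Hk1.
Qed.

Lemma expand_eq (c c' : kind ell q -> F) :
  \sum_k c k *: kvec k = \sum_k c' k *: kvec k -> forall k, c k = c' k.
Proof.
move=> H k; apply/eqP; rewrite -subr_eq0; apply/eqP; move: k; apply: expand_uniq.
by rewrite -[RHS](subrr (\sum_k c' k *: kvec k)) -{1}H -sumrB; apply: eq_bigr => k _; rewrite scalerBl.
Qed.

Lemma sum_single (k' : kind ell q) (a : F) :
  \sum_k (if k == k' then a else 0) *: kvec k = a *: kvec k'.
Proof.
rewrite (bigD1 k') //= eqxx big1 ?addr0 // => k /negbTE ->; exact: scale0r.
Qed.

Definition wtk (k : kind ell q) : 'I_ell -> F :=
  match k with inl (inl j) => beta j | inl (inr j) => fun i => - beta j i | inr _ => fun _ => 0 end.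

Hypothesis Huu : forall i i', br (u i) (u i') = 0.
Hypothesis Hue : forall i j, br (u i) (e j) = beta j i *: e j.
Hypothesis Huf : forall i j, br (u i) (f j) = - beta j i *: f j.

Lemma br_u_kvec i k : br (u i) (kvec k) = wtk k i *: kvec k.
Proof. by case: k => [[j|j]|i'] /=; rewrite ?Hue ?Huf ?Huu ?scale0r. Qed.

Lemma weight_coef (x : g) (mu : 'I_ell -> F) (c : kind ell q -> F) :
  x = \sum_k c k *: kvec k -> (forall i, br (u i) x = mu i *: x) ->
  forall k, c k != 0 -> forall i, wtk k i = mu i.
Proof.
move=> Hx Hmu k ck i.
have : \sum_k (c k * (wtk k i - mu i)) *: kvec k = 0.
  have := Hmu i; rewrite Hx br_sumr scaler_sumr => /eqP; rewrite -subr_eq0 -sumrB.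
  move/eqP=> H; apply: (etrans _ H); apply: eq_bigr => k' _.
  by rewrite brZr br_u_kvec !scalerA mulrBr scalerBl (mulrC (mu i)).
move/expand_uniq/(_ k)/eqP; rewrite mulf_eq0 (negbTE ck) /= subr_eq0.
by move/eqP.
Qed.

Lemma weight_bracket (x y : g) (mx my : 'I_ell -> F) :
  (forall i, br (u i) x = mx i *: x) -> (forall i, br (u i) y = my i *: y) ->
  forall i, br (u i) (br x y) = (mx i + my i) *: br x y.
Proof.
move=> Hx Hy i; rewrite br_der Hx Hy brZl brZr; exact: (esym (scalerDl _ _ _)).
Qed.

Lemma coef_single (k' : kind ell q) (a : F) (c : kind ell q -> F) :
  a *: kvec k' = \sum_k c k *: kvec k -> forall k, c k != 0 -> k = k'.
Proof.
move=> H k; rewrite -sum_single in H; have := expand_eq H k.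
by case: eqP => // _ <-; rewrite eqxx.
Qed.

Lemma coef_zero (c : kind ell q -> F) : 0 = \sum_k c k *: kvec k -> forall k, c k = 0.
Proof. by move=> H; apply: expand_uniq; rewrite -H. Qed.

(* ---------- positivity of roots, from simplicity ---------- *)
Hypothesis Hsimple : simple_lie br.
Hypothesis Hpsys : positive_system_by_height beta.
Hypothesis Hnz : forall j, exists i, beta j i != 0.
Hypothesis Hchar : forall n : nat, (n%:R : F) = 0 -> n = 0%N.

Lemma br_central_all (h : g) : (forall k, br h (kvec k) = 0) -> forall x, br h x = 0.
Proof.
move=> Hh x; case: (expand x) => c ->; rewrite br_sumr big1 // => k _.
by rewrite brZr Hh scaler0.
Qed.

Lemma central_zero (h : g) : (forall k, br h (kvec k) = 0) -> h = 0.
Proof.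
move=> Hh; have Hall := br_central_all Hh.
case: Hsimple => _ [[x [y Hxy]] Hid].
have HI : lie_ideal br <[h]>%VS.
  move=> x' y' /vlineP [a ->]; rewrite brZr brN Hall oppr0 scaler0; exact: mem0v.
case: (Hid _ HI) => HI'.
  by apply/eqP; rewrite -memv0 -HI' memv_line.
exfalso; move: Hxy.
have /vlineP [a ->] : x \in <[h]>%VS by rewrite HI' memvf.
have /vlineP [b ->] : y \in <[h]>%VS by rewrite HI' memvf.
by rewrite brZl brZr brxx !scaler0 eqxx.
Qed.

Lemma posit : forall js : seq 'I_q, js != [::] -> ~ (forall i, \sum_(j <- js) beta j i = 0).
Proof.
case: Hpsys => alpha [cf [Hcomb _ _]].
pose Am : 'M[F]_ell := \matrix_(r, i) beta (alpha r) i.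
have indep : forall d : 'I_ell -> F, (forall i, \sum_r d r * beta (alpha r) i = 0) -> forall r, d r = 0.
  move=> d Hd.
  have Hdet : \det Am != 0.
    apply/negP => /eqP H0.
    have : \det Am^T == 0 by rewrite det_tr H0.
    case/det0P => w w0 Hw.
    have Hw' : forall r, \sum_i w 0 i * beta (alpha r) i = 0.
      move=> r; have := congr1 (fun M : 'rV_ell => M 0 r) Hw; rewrite !mxE => H; apply: etrans H.
      by apply: eq_bigr => i _; rewrite !mxE.
    pose h := \sum_i w 0 i *: u i.
    have Hc : forall k, br h (kvec k) = 0.
      move=> k; rewrite /h br_suml.
      under eq_bigr do rewrite brZl br_u_kvec scalerA.
      rewrite -scaler_suml.
      suff -> : \sum_i w 0 i * wtk k i = 0 by rewrite scale0r.
      case: k => [[j|j]|i0] /=.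
      - under eq_bigr do rewrite Hcomb mulr_sumr.
        rewrite exchange_big big1 // => r _.
        under eq_bigr do rewrite mulrCA.
        by rewrite -mulr_sumr Hw' mulr0.
      - under eq_bigr do rewrite mulrN Hcomb mulr_sumr.
        rewrite sumrN exchange_big big1 ?oppr0 // => r _.
        under eq_bigr do rewrite mulrCA.
        by rewrite -mulr_sumr Hw' mulr0.
      - by rewrite big1 // => i _; rewrite mulr0.
    have h0 := central_zero Hc.
    pose c : kind ell q -> F := fun k => if k is inr i then w 0 i else 0.
    have Hsum : \sum_k c k *: kvec k = 0.
      rewrite big_sumType /= big1 ?add0r; last by move=> k _; rewrite scale0r.
      by rewrite -[RHS]h0.
    move/negP: w0; apply; apply/eqP/rowP => i; rewrite mxE.
    by have := expand_uniq Hsum (inr i).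
  move=> r; apply/eqP/negPn/negP => Hr.
  have : (\row_r0 d r0) *m Am == 0.
    apply/eqP/rowP => i; rewrite !mxE -[RHS](Hd i); apply: eq_bigr => r0 _.
    by rewrite !mxE.
  move=> /eqP Hrow; move/negP: Hdet; apply.
  apply/det0P; exists (\row_r0 d r0) => //.
  by apply/negP => /eqP /rowP /(_ r); rewrite !mxE => /eqP H; rewrite H in Hr.
move=> js Hjs Hsum.
case: js Hjs Hsum => [//|j0 js] _ Hsum.
have Hd : forall i, \sum_r ((\sum_(j <- j0 :: js) cf j r)%N%:R) * beta (alpha r) i = 0.
  move=> i; rewrite -[RHS](Hsum i).
  under eq_bigr do rewrite natr_sum mulr_suml.
  rewrite exchange_big; apply: eq_bigr => j _; rewrite Hcomb.
  by apply: eq_bigr => r _.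
have H0 : forall r, cf j0 r = 0%N.
  move=> r; have := Hchar (indep _ Hd r); rewrite big_cons.
  by move/eqP; rewrite addn_eq0 => /andP[/eqP].
case: (Hnz j0) => i; rewrite Hcomb big1 ?eqxx // => r _.
by rewrite H0 mul0r.
Qed.

Let Hposit := posit.

Lemma EE_closed a b (c : kind ell q -> F) k :
  br (e a) (e b) = \sum_k c k *: kvec k -> c k != 0 -> kE k.
Proof.
move=> H ck.
have Hw := weight_bracket (fun i => Hue i a) (fun i => Hue i b).
have := weight_coef H Hw ck; case: k {ck} => [[j|j]|i] //= Hk.
- by case: (Hposit (js := [:: a; b; j])) => // t; rewrite !big_cons big_nil addr0 addrA -Hk addrC subrr.
- by case: (Hposit (js := [:: a; b])) => // t; rewrite !big_cons big_nil addr0 -Hk.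
Qed.

Lemma FF_closed a b (c : kind ell q -> F) k :
  br (f a) (f b) = \sum_k c k *: kvec k -> c k != 0 -> kF k.
Proof.
move=> H ck.
have Hw := weight_bracket (fun i => Huf i a) (fun i => Huf i b).
have := weight_coef H Hw ck; case: k {ck} => [[j|j]|i] //= Hk.
- case: (Hposit (js := [:: a; b; j])) => // t; rewrite !big_cons big_nil addr0 addrA.
  by move/eqP: (Hk t); rewrite -opprD eq_sym eqr_oppLR => /eqP ->; rewrite addrC subrr.
- case: (Hposit (js := [:: a; b])) => // t; rewrite !big_cons big_nil addr0.
  by move/eqP: (Hk t); rewrite -opprD eq_sym oppr_eq0 => /eqP.
Qed.

Lemma bracket_types y1 y2 (c : kind ell q -> F) k :
  br (vecl y1) (vecl y2) = \sum_k c k *: kvec k -> c k != 0 ->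
  [/\ is_E y1 -> is_E y2 -> kE k, is_F y1 -> is_F y2 -> kF k,
      is_U y1 -> k = kindof y2 & is_U y2 -> k = kindof y1].
Proof.
move=> H ck; split.
- case: y1 H => [[[a s1]|[a s1]]|[i s1]] //; case: y2 => [[[b s2]|[b s2]]|[i s2]] //= H _ _.
  exact: EE_closed H ck.
- case: y1 H => [[[a s1]|[a s1]]|[i s1]] //; case: y2 => [[[b s2]|[b s2]]|[i s2]] //= H _ _.
  exact: FF_closed H ck.
- case: y1 H => [[[a s1]|[a s1]]|[i s1]] //= H _.
  rewrite (vecl_kindof y2) br_u_kvec in H.
  exact: coef_single H k ck.
- case: y2 H => [[[a s2]|[a s2]]|[i s2]] //= H _.
  rewrite (vecl_kindof y1) brN br_u_kvec -scaleNr in H.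
  exact: coef_single H k ck.
Qed.

Lemma UU_none y1 y2 (c : kind ell q -> F) k :
  br (vecl y1) (vecl y2) = \sum_k c k *: kvec k -> c k != 0 -> is_U y1 -> is_U y2 -> False.
Proof.
case: y1 => [[[a s1]|[a s1]]|[i s1]] //; case: y2 => [[[b s2]|[b s2]]|[i' s2]] //=.
by rewrite Huu => /coef_zero ->; rewrite eqxx.
Qed.

Hypothesis Hcomm : forall x y (m n : int) v,
  act x m (act y n v) - act y n (act x m v)
  = act (br x y) (m + n) v + (if m + n == 0 then (m%:~R * frm x y * kk) *: v else 0).



Lemma eval_swap A y1 y2 w (c : kind ell q -> F) : posl y1 -> posl y2 ->
  br (vecl y1) (vecl y2) = \sum_k c k *: kvec k ->
  eval (A ++ y1 :: y2 :: w) = eval (A ++ y2 :: y1 :: w)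
     + \sum_k c k *: eval (A ++ mk k (letter_s y1 + letter_s y2) :: w).
Proof.
move=> p1 p2 H; rewrite !(eval_cat A); under eq_bigr do rewrite (eval_cat A) -pre_scale.
rewrite -pre_sum.
rewrite -[X in _ = X + _]scale1r -pre_lin scale1r; congr (pre A _).
rewrite !eval_cons.
set v := eval w; set m1 := letter_mode y1; set m2 := letter_mode y2.
have Hm : m1 + m2 = - ((letter_s y1 + letter_s y2)%N%:Z).
  by rewrite /m1 /m2 /letter_mode PoszD opprD.
have Hne : (m1 + m2 == 0) = false.
  by rewrite Hm oppr_eq0; apply/negbTE; move: p1; rewrite /pos eqz_nat addn_eq0 negb_and -!lt0n => ->.
have Hc := Hcomm (vecl y1) (vecl y2) m1 m2 v; rewrite Hne addr0 in Hc.
move/eqP: Hc; rewrite subr_eq => /eqP ->; rewrite addrC; congr (_ + _).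
rewrite H act_sumg; apply: eq_bigr => k _.
by rewrite actZg eval_cons vecl_mk /letter_mode mk_s Hm.
Qed.

Fixpoint inv (w : seq letter) : nat :=
  if w is a :: w' then (count (fun b => ~~ le a b) w' + inv w')%N else 0%N.

Lemma inv_swap A y1 y2 w : ~~ le y1 y2 ->
  (inv (A ++ y2 :: y1 :: w) < inv (A ++ y1 :: y2 :: w))%N.
Proof.
move=> H; elim: A => [|a A IH] /=.
  have -> : le y2 y1 by move: (letter_le_total y1 y2); rewrite (negbTE H).
  by rewrite H /= add0n addnA [X in (X + _ < _)%N]addnC addnA ltnS leqnn.
have Hp : perm_eq (A ++ y2 :: y1 :: w) (A ++ y1 :: y2 :: w).
  by rewrite perm_cat2l -[y2 :: y1 :: w]/([:: y2; y1] ++ w)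
             -[y1 :: y2 :: w]/([:: y1; y2] ++ w) perm_cat2r (perm_catC [:: y2]).
by rewrite (permP Hp) ltn_add2l.
Qed.

Lemma unsorted_split w : ~~ sorted le w ->
  exists A y1 y2 w', w = A ++ y1 :: y2 :: w' /\ ~~ le y1 y2.
Proof.
elim: w => // a w IH; case: w IH => // b w IH /=; rewrite negb_and.
case/orP => [H|H]; first by exists [::], a, b, w.
case: (IH H) => A [y1 [y2 [w' [-> Hy]]]].
by exists (a :: A), y1, y2, w'.
Qed.

Lemma size_swap A y1 y2 w : size (A ++ y2 :: y1 :: w) = size (A ++ y1 :: y2 :: w).
Proof. by rewrite !size_cat. Qed.

Lemma all_swap (p : pred letter) A y1 y2 w : all p (A ++ y1 :: y2 :: w) -> all p (A ++ y2 :: y1 :: w).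
Proof. by rewrite !all_cat /= => /andP[-> /and3P[-> -> ->]]. Qed.

Lemma all_merge A y1 y2 w k : all posl (A ++ y1 :: y2 :: w) ->
  all posl (A ++ mk k (letter_s y1 + letter_s y2) :: w).
Proof.
rewrite !all_cat /= => /andP[-> /and3P[p1 _ ->]].
by rewrite /pos mk_s ltn_addr.
Qed.

Lemma GS (Q : seq letter -> Prop) :
  (forall A y1 y2 w, Q (A ++ y1 :: y2 :: w) -> all posl (A ++ y1 :: y2 :: w) ->
     ~~ le y1 y2 -> Q (A ++ y2 :: y1 :: w)) ->
  (forall A y1 y2 w (c : kind ell q -> F) k, Q (A ++ y1 :: y2 :: w) ->
     all posl (A ++ y1 :: y2 :: w) -> ~~ le y1 y2 ->
     br (vecl y1) (vecl y2) = \sum_k c k *: kvec k -> c k != 0 ->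
     Q (A ++ mk k (letter_s y1 + letter_s y2) :: w)) ->
  forall w, Q w -> all posl w -> W Q (eval w).
Proof.
move=> Hs Hm.
suff: forall n m w, (size w <= n)%N -> (inv w <= m)%N -> Q w -> all posl w -> W Q (eval w).
  by move=> H w; apply: (H (size w) (inv w)).
elim=> [|n IHn] m.
  by case=> // _ _ HQ _; apply: Weval.
elim: m => [|m IHm] w Hsz Hinv HQ Hp.
  case Hsort: (sorted le w); first by apply: Weval => //; rewrite /pbw Hsort.
  case: (unsorted_split (negbT Hsort)) => A [y1 [y2 [w' [Ew Hy]]]]; subst w.
  by have := inv_swap A w' Hy; rewrite leqn0 in Hinv; rewrite (eqP Hinv).
case Hsort: (sorted le w); first by apply: Weval => //; rewrite /pbw Hsort.
case: (unsorted_split (negbT Hsort)) => A [y1 [y2 [w' [Ew Hy]]]]; subst w.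
case: (expand (br (vecl y1) (vecl y2))) => c Hc.
have [p1 p2] : posl y1 /\ posl y2.
  by move: Hp; rewrite all_cat /= => /andP[_ /and3P[-> -> _]].
rewrite (eval_swap A w' p1 p2 Hc); apply: WD.
  apply: IHm.
  - by rewrite size_swap.
  - by rewrite -ltnS (leq_trans (inv_swap A w' Hy)).
  - exact: Hs.
  - exact: all_swap.
apply: Wsum => k _; case: (eqVneq (c k) 0) => [->|ck]; first by rewrite scale0r; apply: W0.
apply: WZ; apply: (IHn (inv (A ++ mk k (letter_s y1 + letter_s y2) :: w'))) => //.
- by move: Hsz; rewrite !size_cat /= !addnS ltnS.
- exact: (Hm _ _ _ _ c).
- exact: all_merge.
Qed.

Lemma sorted_mid A y1 y2 w : sorted le (A ++ y1 :: y2 :: w) -> le y1 y2.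
Proof. by case/cat_sorted2 => _ /= /andP[]. Qed.

Lemma surgery (tp : pred letter) W' T A y1 y2 w :
  A ++ y1 :: y2 :: w = W' ++ T -> sorted le T -> (forall l t, tp l -> t \in T -> le l t) ->
  all tp W' -> ~~ le y1 y2 -> exists w', W' = A ++ y1 :: y2 :: w' /\ w = w' ++ T.
Proof.
move=> + HT Hle + Hy; elim: A W' => [|a A IH] [|b W'] /=.
- by move=> E; rewrite -E /= in HT; case/andP: HT => H _; rewrite H in Hy.
- case=> <-; case: W' => [|b' W'] /=.
    move=> E /andP[Hy1 _]; have := Hle y1 y2 Hy1; rewrite -E mem_head => /(_ isT) H.
    by rewrite H in Hy.
  by case=> <- -> _; exists W'.
- move=> E; rewrite -E in HT; move/path_sorted: HT => /sorted_mid H.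
  by rewrite H in Hy.
- case=> <- /IH H /andP[_ /H] [w' [-> ->]]; by exists w'.
Qed.

Lemma BS (tp : pred letter) (T : seq letter) (R : seq letter -> Prop) :
  sorted le T -> all posl T -> (forall l t, tp l -> t \in T -> le l t) ->
  (forall A y1 y2 w, R (A ++ y1 :: y2 :: w) -> all tp (A ++ y1 :: y2 :: w) ->
     ~~ le y1 y2 -> R (A ++ y2 :: y1 :: w)) ->
  (forall A y1 y2 w (c : kind ell q -> F) k, R (A ++ y1 :: y2 :: w) ->
     all tp (A ++ y1 :: y2 :: w) -> ~~ le y1 y2 ->
     br (vecl y1) (vecl y2) = \sum_k c k *: kvec k -> c k != 0 ->
     tp (mk k (letter_s y1 + letter_s y2)) /\ R (A ++ mk k (letter_s y1 + letter_s y2) :: w)) ->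
  forall W', all tp W' -> all posl W' -> R W' ->
  W (fun x => exists W'', x = W'' ++ T /\ all tp W'' /\ R W'') (eval (W' ++ T)).
Proof.
move=> HT HpT Hle Hs Hm W' HW' HpW' HR.
apply: GS; last first.
- by rewrite all_cat HpW'.
- by exists W'.
- move=> A y1 y2 w c k [W'' [E [Ha HR']]] _ Hy Hc ck.
  have [w' [E1 E2]] := surgery E HT Hle Ha Hy.
  rewrite E1 in Ha HR'.
  have [Htp HR''] := Hm _ _ _ _ _ _ HR' Ha Hy Hc ck.
  exists (A ++ mk k (letter_s y1 + letter_s y2) :: w'); split; first by rewrite E2 -catA.
  by split => //; move: Ha; rewrite !all_cat /= Htp => /andP[-> /and3P[_ _ ->]].
- move=> A y1 y2 w [W'' [E [Ha HR']]] _ Hy.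
  have [w' [E1 E2]] := surgery E HT Hle Ha Hy.
  rewrite E1 in Ha HR'.
  exists (A ++ y2 :: y1 :: w'); split; first by rewrite E2 -catA.
  by split; [exact: all_swap | exact: Hs].
Qed.

Notation plus := (@pbw_plus ell q).
Notation minus := (@pbw_minus ell q).
Notation zero := (@pbw_zero ell q).

Lemma filter_excl (p p' : pred letter) (s : seq letter) :
  all p s -> (forall b, p b -> p' b = false) -> filter p' s = [::].
Proof. by move=> /allP H H'; apply: filter_nil => b /H /H'. Qed.

Lemma pmz_cat3 (E' M' Z' : seq letter) :
  all (@is_E ell q) E' -> all (@is_F ell q) M' -> all (@is_U ell q) Z' ->
  [/\ plus (E' ++ M' ++ Z') = E', minus (E' ++ M' ++ Z') = M' & zero (E' ++ M' ++ Z') = Z'].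
Proof.
move=> HE HM HZ; rewrite /pbw_plus /pbw_minus /pbw_zero !filter_cat.
rewrite (all_filterP HE) (all_filterP HM) (all_filterP HZ).
rewrite (filter_excl HE (@EnF _ _)) (filter_excl HE (@EnU _ _)).
rewrite (filter_excl HM (@FnE _ _)) (filter_excl HM (@FnU _ _)).
rewrite (filter_excl HZ (@UnE _ _)) (filter_excl HZ (@UnF _ _)).
by rewrite ?cats0.
Qed.

Lemma all_plus x : all (@is_E ell q) (plus x). Proof. exact: filter_all. Qed.
Lemma all_minus x : all (@is_F ell q) (minus x). Proof. exact: filter_all. Qed.
Lemma all_zero x : all (@is_U ell q) (zero x). Proof. exact: filter_all. Qed.

Lemma pbw_parts x : pbw x ->
  [/\ sorted le (minus x ++ zero x), sorted le (zero x), all posl (minus x ++ zero x),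
      all posl (plus x) & all posl (zero x)].
Proof.
move=> /andP[Hs Hp]; have E := sorted_split Hs; rewrite E in Hs Hp.
case/cat_sorted2: Hs => _ Hs; split => //.
- by case/cat_sorted2: Hs.
- by move: Hp; rewrite all_cat => /andP[_ ->].
- by move: Hp; rewrite all_cat => /andP[-> _].
- by move: Hp; rewrite !all_cat => /and3P[_ _ ->].
Qed.

Lemma le_EF l t : is_E l -> ~~ is_E t -> le l t.
Proof. by move=> H1 H2; apply: lt_rank_le; rewrite !rankE H1 (negbTE H2); case: ifP. Qed.
Lemma le_FU l t : is_F l -> is_U t -> le l t.
Proof. by move=> H1 H2; apply: lt_rank_le; rewrite !rankE (FnE H1) H1 (UnE H2) (UnF H2). Qed.

Lemma BSE A x : all (@is_E ell q) A -> all posl A -> pbw x ->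
  W (fun x' => (size (plus x') <= size A + size (plus x))%N /\ minus x' = minus x /\ zero x' = zero x)
    (eval (A ++ x)).
Proof.
move=> HA HpA Hx; have [Hs1 _ Hp1 Hp2 _] := pbw_parts Hx.
have -> : A ++ x = (A ++ plus x) ++ (minus x ++ zero x).
  by rewrite -catA -sorted_split //; case/andP: Hx.
apply: (Wmono _ (BS (tp := @is_E ell q) (R := fun W' => (size W' <= size A + size (plus x))%N) Hs1 Hp1 _ _ _ _ _ _)).
- move=> x' _ [W'' [-> [HW HR]]].
  have [-> -> ->] := pmz_cat3 HW (all_minus x) (all_zero x); by [].
- move=> l t Hl; rewrite mem_cat => /orP[] Ht; apply: le_EF => //.
    by move/allP: (all_minus x) => /(_ t Ht) /FnE ->.
  by move/allP: (all_zero x) => /(_ t Ht) /UnE ->.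
- by move=> A' y1 y2 w; rewrite size_swap.
- move=> A' y1 y2 w c k HR Ha _ Hc ck; split.
    rewrite is_E_mk; have [H _ _ _] := bracket_types Hc ck; apply: H.
    - by move: Ha; rewrite all_cat /= => /andP[_ /and3P[]].
    - by move: Ha; rewrite all_cat /= => /andP[_ /and3P[]].
  by apply: leq_trans _ HR; rewrite !size_cat /= !addnS ltnS leqnSn.
- by rewrite all_cat HA all_plus.
- by rewrite all_cat HpA.
- by rewrite size_cat.
Qed.

Lemma sd_swap A y1 y2 w : sd (A ++ y2 :: y1 :: w) = sd (A ++ y1 :: y2 :: w).
Proof. by rewrite !sd_cat !sd_cons; congr (_ + _)%N; rewrite addnCA. Qed.
Lemma sd_merge A y1 y2 w k :
  sd (A ++ mk k (letter_s y1 + letter_s y2) :: w) = sd (A ++ y1 :: y2 :: w).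
Proof. by rewrite !sd_cat !sd_cons mk_s; congr (_ + _)%N; rewrite addnA. Qed.

Lemma all3 (p : pred letter) A y1 y2 w : all p (A ++ y1 :: y2 :: w) -> p y1 /\ p y2.
Proof. by rewrite all_cat /= => /andP[_ /and3P[-> -> _]]. Qed.

Lemma BSF A Z' : all (@is_F ell q) A -> all posl A -> (0 < size A)%N ->
  sorted le Z' -> all (@is_U ell q) Z' -> all posl Z' ->
  W (fun x' => exists M', x' = M' ++ Z' /\ all (@is_F ell q) M' /\ (0 < size M')%N /\ sd M' = sd A)
    (eval (A ++ Z')).
Proof.
move=> HA HpA HsA HZ HUZ HpZ.
apply: (Wmono _ (BS (tp := @is_F ell q) (R := fun W' => (0 < size W')%N /\ sd W' = sd A) HZ HpZ _ _ _ _ _ _)).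
- by move=> x' _ [W'' [-> [HW [H1 H2]]]]; exists W''; repeat split.
- by move=> l t Hl Ht; apply: le_FU => //; move/allP: HUZ; apply.
- by move=> A' y1 y2 w [H1 H2]; rewrite size_swap sd_swap.
- move=> A' y1 y2 w c k [H1 H2] Ha _ Hc ck; split.
    rewrite is_F_mk; have [_ H _ _] := bracket_types Hc ck; have [? ?] := all3 Ha; exact: H.
  by rewrite sd_merge size_cat /= addnS.
- exact: HA.
- exact: HpA.
- by [].
Qed.

Lemma BSU A : all (@is_U ell q) A -> all posl A ->
  W (fun x' => all (@is_U ell q) x' /\ size x' = size A) (eval A).
Proof.
move=> HA HpA; rewrite -[A]cats0.
apply: (Wmono _ (BS (tp := @is_U ell q) (R := fun W' => size W' = size A) _ _ _ _ _ _ _ _)) => //.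
- by move=> x' _ [W'' [-> [HW H]]]; rewrite cats0 size_cat /= addn0.
- by move=> A' y1 y2 w; rewrite size_swap.
- move=> A' y1 y2 w c k _ Ha _ Hc ck; have [? ?] := all3 Ha.
  by case: (UU_none Hc ck).
all: by rewrite ?cats0.
Qed.

Definition Good (n : nat) (M Z : seq letter) (x : seq letter) : Prop :=
  (size (plus x) <= n)%N /\ (M != [::] -> minus x != [::]) /\
  ((minus x = M /\ (zero x = Z \/ size (zero x) = (size Z).+1)) \/
   ((sd M < sd (minus x))%N /\ (size (zero x) <= size Z)%N)).

Lemma Good_mono n n' M Z x : (n <= n')%N -> Good n M Z x -> Good n' M Z x.
Proof. by move=> H [H1 H2]; split => //; apply: leq_trans H. Qed.

Lemma E_Good A x n M Z : all (@is_E ell q) A -> all posl A -> pbw x -> Good n M Z x ->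
  W (Good (size A + n) M Z) (eval (A ++ x)).
Proof.
move=> HA HpA Hx [G1 G2]; apply: Wmono (BSE HA HpA Hx) => x' _ [H1 [H2 H3]].
split; first by apply: leq_trans H1 _; rewrite leq_add2l.
by rewrite H2 H3.
Qed.

Lemma parts_E l x : is_E l -> [/\ plus (l :: x) = l :: plus x, minus (l :: x) = minus x & zero (l :: x) = zero x].
Proof. by move=> H; rewrite /pbw_plus /pbw_minus /pbw_zero /= H (EnF H) (EnU H). Qed.
Lemma parts_F l x : is_F l -> [/\ plus (l :: x) = plus x, minus (l :: x) = l :: minus x & zero (l :: x) = zero x].
Proof. by move=> H; rewrite /pbw_plus /pbw_minus /pbw_zero /= H (FnE H) (FnU H). Qed.
Lemma parts_U l x : is_U l -> [/\ plus (l :: x) = plus x, minus (l :: x) = minus x & zero (l :: x) = l :: zero x].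
Proof. by move=> H; rewrite /pbw_plus /pbw_minus /pbw_zero /= H (UnE H) (UnF H). Qed.

Lemma sorted_after l x : sorted le (l :: x) -> forall b, b \in x -> (rank l <= rank b)%N.
Proof. by move=> Hs; case: (@sorted_split_rank _ _ [::] x l Hs). Qed.

Lemma noE_split x : pbw x -> plus x = [::] -> x = minus x ++ zero x.
Proof. by move=> /andP[Hs _] H; rewrite {1}(sorted_split Hs) H. Qed.

Lemma pos_of_pbw l x : pbw (l :: x) -> posl l.
Proof. by case/andP => _ /andP[]. Qed.

Lemma noE_after l x : pbw (l :: x) -> ~~ is_E l -> plus (l :: x) = [::].
Proof.
case/andP=> Hs _ Hl; apply: filter_nil => b; rewrite inE => /orP[/eqP->|bx].
  exact: negbTE.
have := sorted_after Hs bx; rewrite !rankE (negbTE Hl).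
by case: ifP => // _; case: ifP.
Qed.

Lemma allU_after l x : pbw (l :: x) -> is_U l -> all (@is_U ell q) (l :: x).
Proof.
case/andP=> Hs _ Hl; apply/allP => b; rewrite inE => /orP[/eqP->//|bx].
have := sorted_after Hs bx; rewrite !rankE (UnE Hl) (UnF Hl).
by case: b {bx} => [[[]|[]]|[]].
Qed.

Lemma sorted_FZ l M Z : is_F l -> sorted le (l :: M) -> sorted le (M ++ Z) ->
  all (@is_U ell q) Z -> sorted le (l :: M ++ Z).
Proof.
move=> Hl; case: M => [|b M] /=.
  by case: Z => [|b Z] //= _ -> /andP[Hb _]; rewrite le_FU.
by case/andP => -> _ ->.
Qed.

Lemma Ucase x y : pbw x -> all (@is_U ell q) x -> is_U y -> posl y ->
  W (Good (size (plus x)) (minus x) (zero x)) (eval (y :: x)).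
Proof.
move=> Hx HU Hy py.
have HUy : all (@is_U ell q) (y :: x) by rewrite /= Hy.
have Hpx : all posl x by case/andP: Hx.
apply: Wmono (BSU HUy _); last by rewrite /= py.
move=> x' _ [HU' Hs'].
have Hm : minus x = [::] by apply: (filter_excl HU (@UnF _ _)).
have Hz : zero x = x by apply/all_filterP.
have Hm' : minus x' = [::] by apply: (filter_excl HU' (@UnF _ _)).
have Hp' : plus x' = [::] by apply: (filter_excl HU' (@UnE _ _)).
have Hz' : zero x' = x' by apply/all_filterP.
rewrite /Good Hm Hz Hm' Hp' Hz' Hs' /=; split => //; split => //.
by left; split => //; right.
Qed.

Lemma Umove x : pbw x -> forall y, is_U y -> posl y ->
  W (Good (size (plus x)) (minus x) (zero x)) (eval (y :: x)).
Proof.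
elim: x => [|l x1 IH] Hx y Hy py; first by apply: Ucase.
have Hx1 := pbw_cons Hx; have pl := pos_of_pbw Hx.
case: (expand (br (vecl y) (vecl l))) => c Hc.
have Hsw : eval (y :: l :: x1) = eval (l :: y :: x1)
    + \sum_k c k *: eval (mk k (letter_s y + letter_s l) :: x1) := eval_swap [::] x1 py pl Hc.
case: (or3P (type_cases l)) => Hl.
- have [P1 M1 Z1] := parts_E x1 Hl; rewrite P1 M1 Z1 Hsw; apply: WD.
    rewrite eval_cons; apply: (Wlin (actlin _ _)) (IH Hx1 y Hy py) => x'' Hx'' Gx''.
    by have := E_Good (A := [:: l]) _ _ Hx'' Gx''; rewrite /= Hl pl => /(_ isT isT).
  apply: Wsum => k _; case: (eqVneq (c k) 0) => [->|ck]; first by rewrite scale0r; apply: W0.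
  apply: WZ; have [_ _ Hk _] := bracket_types Hc ck; have {}Hk := Hk Hy; subst k.
  have HE : all (@is_E ell q) [:: mk (kindof l) (letter_s y + letter_s l)].
    by rewrite /= is_E_mk kE_kindof Hl.
  have Hp : all posl [:: mk (kindof l) (letter_s y + letter_s l)].
    by rewrite /= /pos mk_s ltn_addr.
  apply: Wmono (BSE HE Hp Hx1) => x' _ [H1 [H2 H3]].
  rewrite /Good H2 H3; split => //; split => //; by left; split => //; left.
- have P0 : plus x1 = [::] by have := noE_after Hx (negbT (FnE Hl)); rewrite /pbw_plus /= (FnE Hl).
  have [P1 M1 Z1] := parts_F x1 Hl; rewrite P1 M1 Z1 P0 Hsw; apply: WD.
    rewrite eval_cons; apply: (Wlin (actlin _ _)) (IH Hx1 y Hy py) => x'' Hx'' [G1 [G2 G3]]; rewrite -eval_cons.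
    rewrite P0 leqn0 size_eq0 in G1.
    have Hspl := noE_split Hx'' (eqP G1).
    case: G3 => [[Em Ez]|[Hsd Hsz]].
      apply: Weval.
        rewrite /pbw; apply/andP; split; last first.
          by case/andP: Hx'' => _ Hp''; apply/andP; split.
        rewrite Hspl Em; apply: sorted_FZ => //; last exact: all_zero.
          case/andP: Hx => Hs _; rewrite (noE_split Hx1 P0) in Hs.
          by have [] := cat_sorted2 (s := l :: minus x1) Hs.
        by rewrite -Em -Hspl; case/andP: Hx''.
      have [Q1 Q2 Q3] := parts_F x'' Hl.
      rewrite /Good Q1 Q2 Q3 (eqP G1) Em; split => //; split => //; by left.
    have HF : all (@is_F ell q) (l :: minus x'') by rewrite /= Hl all_minus.
    have Hp : all posl (l :: minus x'').
      by rewrite /= pl; have [_ _ H _ _] := pbw_parts Hx''; move: H; rewrite all_cat => /andP[].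
    have [_ Hsz'' _ _ Hpz''] := pbw_parts Hx''.
    rewrite Hspl -cat_cons.
    apply: Wmono (BSF HF Hp _ Hsz'' (all_zero x'') Hpz'') => // x' _ [M' [-> [HM' [HsM Hsd']]]].
    have [Q1 Q2 Q3] := pmz_cat3 (E' := [::]) isT HM' (all_zero x'').
    rewrite /= in Q1 Q2 Q3; rewrite /Good Q1 Q2 Q3; split => //; split.
      by move=> _; rewrite -size_eq0 -lt0n.
    right; split => //; by rewrite Hsd' sd_cons sd_cons ltn_add2l.
  apply: Wsum => k _; case: (eqVneq (c k) 0) => [->|ck]; first by rewrite scale0r; apply: W0.
  apply: WZ; have [_ _ Hk _] := bracket_types Hc ck; have {}Hk := Hk Hy; subst k.
  set m := mk (kindof l) (letter_s y + letter_s l).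
  have HF : all (@is_F ell q) (m :: minus x1) by rewrite /= is_F_mk kF_kindof Hl all_minus.
  have Hp : all posl (m :: minus x1).
    by rewrite /= /pos mk_s ltn_addr //; have [_ _ H _ _] := pbw_parts Hx1; move: H; rewrite all_cat => /andP[].
  have [_ Hsz1 _ _ Hpz1] := pbw_parts Hx1.
  have -> : eval (m :: x1) = eval ((m :: minus x1) ++ zero x1).
    by rewrite cat_cons -(noE_split Hx1 P0).
  apply: Wmono (BSF HF Hp _ Hsz1 (all_zero x1) Hpz1) => // x' _ [M' [-> [HM' [HsM Hsd']]]].
  have [Q1 Q2 Q3] := pmz_cat3 (E' := [::]) isT HM' (all_zero x1).
  rewrite /= in Q1 Q2 Q3; rewrite /Good Q1 Q2 Q3; split => //; split.
    by move=> _; rewrite -size_eq0 -lt0n.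
  right; split => //; rewrite Hsd' !sd_cons /m mk_s -addnA -[X in (X < _)%N]add0n ltn_add2r.
  exact: py.
- by apply: Ucase => //; apply: allU_after.
Qed.

Lemma Fcase x y : pbw x -> plus x = [::] -> is_F y -> posl y ->
  W (Good (size (plus x)) (minus x) (zero x)) (eval (y :: x)).
Proof.
move=> Hx P0 Hy py.
have HF : all (@is_F ell q) (y :: minus x) by rewrite /= Hy all_minus.
have [_ Hsz _ _ Hpz] := pbw_parts Hx.
have Hp : all posl (y :: minus x).
  by rewrite /= py; have [_ _ H _ _] := pbw_parts Hx; move: H; rewrite all_cat => /andP[].
have -> : eval (y :: x) = eval ((y :: minus x) ++ zero x).
  by rewrite cat_cons -(noE_split Hx P0).
apply: Wmono (BSF HF Hp _ Hsz (all_zero x) Hpz) => // x' _ [M' [-> [HM' [HsM Hsd']]]].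
have [Q1 Q2 Q3] := pmz_cat3 (E' := [::]) isT HM' (all_zero x).
rewrite /= in Q1 Q2 Q3; rewrite /Good Q1 Q2 Q3 P0; split => //; split.
  by move=> _; rewrite -size_eq0 -lt0n.
right; split => //; rewrite Hsd' sd_cons -[X in (X < _)%N]add0n ltn_add2r.
exact: py.
Qed.

Lemma Fmove x : pbw x -> forall y, is_F y -> posl y ->
  W (Good (size (plus x)) (minus x) (zero x)) (eval (y :: x)).
Proof.
elim: x => [|l x1 IH] Hx y Hy py; first by apply: Fcase.
case Hl: (is_E l); last by apply: Fcase => //; apply: noE_after => //; rewrite Hl.
have Hx1 := pbw_cons Hx; have pl := pos_of_pbw Hx.
case: (expand (br (vecl y) (vecl l))) => c Hc.
have Hsw : eval (y :: l :: x1) = eval (l :: y :: x1)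
    + \sum_k c k *: eval (mk k (letter_s y + letter_s l) :: x1) := eval_swap [::] x1 py pl Hc.
have [P1 M1 Z1] := parts_E x1 Hl; rewrite P1 M1 Z1 Hsw; apply: WD.
  rewrite eval_cons; apply: (Wlin (actlin _ _)) (IH Hx1 y Hy py) => x'' Hx'' Gx''.
  by have := E_Good (A := [:: l]) _ _ Hx'' Gx''; rewrite /= Hl pl => /(_ isT isT).
apply: Wsum => k _; apply: WZ.
set m := mk k (letter_s y + letter_s l).
have pm : posl m by rewrite /pos /m mk_s ltn_addr.
case: (or3P (type_cases m)) => Hm.
- have HE : all (@is_E ell q) [:: m] by rewrite /= Hm.
  have Hp : all posl [:: m] by rewrite /= pm.
  apply: Wmono (BSE HE Hp Hx1) => x' _ [H1 [H2 H3]].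
  rewrite /Good H2 H3; split => //; split => //; by left; split => //; left.
- apply: Wmono (IH Hx1 m Hm pm) => x' _; apply: Good_mono; exact: leqnSn.
- apply: Wmono (Umove Hx1 Hm pm) => x' _; apply: Good_mono; exact: leqnSn.
Qed.

Notation C := (@lemma3p2_conditions ell q).

Lemma Good_C z x : Good (size (plus z)) (minus z) (zero z) x -> C z x.
Proof.
move=> [G1 [G2 G3]]; rewrite /lemma3p2_conditions !addn1; split.
- split; first by apply: leq_trans G1 _.
  by case: G3 => [[_ [->|->]]|[_ H]] //; apply: leq_trans H _.
- exact: G2.
- move=> Hm; case: G3 => [[_ [->|->]]|[H _]]; [by right|by left|].
  by rewrite Hm ltnn in H.
- move=> Hs; case: G3 => [[-> _]//|[_ H]].
  by rewrite Hs ltnn in H.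
Qed.

Lemma K1_C z x : (size (plus x) <= (size (plus z)).+1)%N -> zero x = zero z ->
  (minus z != [::] -> minus x != [::]) -> C z x.
Proof.
move=> H1 H2 H3; rewrite /lemma3p2_conditions !addn1 H2; split.
- by split => //; exact: leqnSn.
- exact: H3.
- by move=> _; right.
- by move/eqP; rewrite eqn_leq ltnn andbF.
Qed.

Lemma K2_C z x : (size (plus x) <= (size (plus z)).+1)%N -> (sd (minus z) < sd (minus x))%N ->
  (size (zero x) <= size (zero z))%N -> (minus z != [::] -> minus x != [::]) -> C z x.
Proof.
move=> H1 H2 H3 H4; rewrite /lemma3p2_conditions !addn1; split.
- by split => //; apply: leq_trans H3 _.
- exact: H4.
- by move=> Hm; rewrite Hm ltnn in H2.
- by move=> Hs; rewrite Hs ltnn in H3.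
Qed.

Hypothesis Hvac : forall x (n : int), 0 <= n -> act x n vac = 0.

Lemma if0 (b : bool) (a : F) (v : V) : (if b then (0%:~R * a) *: v else 0) = 0.
Proof. by case: b; rewrite // mulr0z mul0r scale0r. Qed.

Lemma comm0 x l v : act x 0 (act (vecl l) (letter_mode l) v) =
  act (vecl l) (letter_mode l) (act x 0 v) + act (br x (vecl l)) (letter_mode l) v.
Proof.
have := Hcomm x (vecl l) 0 (letter_mode l) v; rewrite add0r -mulrA if0 addr0.
by move/eqP; rewrite subr_eq => /eqP ->; rewrite addrC.
Qed.

Lemma act_u0 i w : exists lam : F, act (u i) 0 (eval w) = lam *: eval w.
Proof.
elim: w => [|l w [lam IH]]; first by exists 0; rewrite scale0r Hvac.
exists (lam + wtk (kindof l) i); rewrite eval_cons comm0 IH vecl_kindof br_u_kvec.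
by rewrite actZv actZg -scalerDl.
Qed.

Lemma termA z i : pbw z -> W (C z) (act (u i) (-1) (act (u i) 0 (eval z))).
Proof.
move=> Hz; case: (act_u0 i z) => lam ->; rewrite actZv; apply: WZ.
have -> : act (u i) (-1) (eval z) = eval (inr (i, 1%N) :: z) by [].
by apply: Wmono (Umove Hz (y := inr (i, 1%N)) isT isT) => x _; apply: Good_C.
Qed.

Lemma perm_swap3 A y1 y2 w : perm_eq (A ++ y2 :: y1 :: w) (A ++ y1 :: y2 :: w).
Proof.
by rewrite perm_cat2l -[y2 :: y1 :: w]/([:: y2; y1] ++ w)
           -[y1 :: y2 :: w]/([:: y1; y2] ++ w) perm_cat2r (perm_catC [:: y2]).
Qed.

Lemma filt_cons (p : pred letter) A y w : filter p (A ++ y :: w) = filter p A ++ filter p (y :: w).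
Proof. by rewrite filter_cat. Qed.

Definition FU (l : letter) := is_F l || is_U l.

Lemma mixed_GS (M0 : seq letter) (nz : nat) w :
  all FU w -> all posl w -> (sd M0 < sd (minus w))%N -> (size (zero w) <= nz)%N -> minus w != [::] ->
  W (fun x => all FU x /\ (sd M0 < sd (minus x))%N /\ (size (zero x) <= nz)%N /\ minus x != [::])
    (eval w).
Proof.
move=> H1 H2 H3 H4 H5; apply: GS => //; last first.
- move=> A' y1 y2 w' c k [HFU [Hsd [Hsz Hne]]] _ Hy Hc ck.
  have [fu1 fu2] := all3 HFU.
  have [_ HFF HU1 HU2] := bracket_types Hc ck.
  have Hall : forall m', FU m' -> all FU (A' ++ m' :: w').
    by move=> m' Hm'; move: HFU; rewrite !all_cat /= Hm' => /andP[-> /and3P[_ _ ->]].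
  case/orP: fu1 => t1; case/orP: fu2 => t2.
  + have Hm : is_F (mk k (letter_s y1 + letter_s y2)) by rewrite is_F_mk HFF.
    move: Hsd Hsz Hne; rewrite /pbw_minus /pbw_zero !filt_cons /= Hm t1 t2 (FnU Hm) (FnU t1) (FnU t2).
    move=> Hsd Hsz Hne; split; first by apply: Hall; rewrite /FU Hm.
    split; first by move: Hsd; rewrite !sd_cat !sd_cons mk_s -addnA.
    split => //; by rewrite -size_eq0 size_cat /= addnS.
  + by move: Hy; rewrite le_FU.
  + have Hk := HU1 t1; subst k.
    have Hm : is_F (mk (kindof y2) (letter_s y1 + letter_s y2)) by rewrite is_F_mk kF_kindof.
    move: Hsd Hsz Hne; rewrite /pbw_minus /pbw_zero !filt_cons /= Hm t2 (FnU Hm) (UnF t1) t1 (FnU t2).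
    move=> Hsd Hsz Hne; split; first by apply: Hall; rewrite /FU Hm.
    split.
      apply: leq_trans Hsd _; rewrite !sd_cat !sd_cons mk_s leq_add2l leq_add2r.
      exact: leq_addl.
    split; last by rewrite -size_eq0 size_cat /= addnS.
    by apply: leq_trans Hsz; rewrite !size_cat /= addnS.
  + by case: (UU_none Hc ck).
- move=> A' y1 y2 w' [HFU [Hsd [Hsz Hne]]] _ Hy.
  have Hp := perm_swap3 A' y1 y2 w'.
  have Hm := perm_filter (@is_F ell q) Hp; have Hz := perm_filter (@is_U ell q) Hp.
  split; first exact: all_swap.
  rewrite /pbw_minus /pbw_zero (sd_perm Hm) (perm_size Hz); split => //; split => //.
  by rewrite -size_eq0 (perm_size Hm) size_eq0.
Qed.

Lemma split_facts z A l w1 : pbw z -> z = A ++ l :: w1 ->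
  [/\ pbw w1, posl l, sorted le A /\ all posl A,
      (forall a, a \in A -> rank a <= rank l)%N & (forall b, b \in w1 -> rank l <= rank b)%N].
Proof.
move=> Hz Ez; case/andP: (Hz) => Hs Hp; rewrite Ez in Hs Hp.
have [HA Hw] := sorted_split_rank Hs.
case/cat_sorted2: Hs => HsA Hsl.
move: Hp; rewrite all_cat /= => /andP[HpA /andP[pl Hpw]].
split => //; rewrite /pbw Hpw andbT; exact: path_sorted Hsl.
Qed.

Lemma rank0 (a : letter) : (rank a <= 0)%N -> is_E a.
Proof. by rewrite rankE; case: a => [[[]|[]]|[]]. Qed.
Lemma rank1 (a : letter) : (rank a <= 1)%N -> ~~ is_U a.
Proof. by rewrite rankE; case: a => [[[]|[]]|[]]. Qed.
Lemma rank1' (a : letter) : (1 <= rank a)%N -> ~~ is_E a.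
Proof. by rewrite rankE; case: a => [[[]|[]]|[]]. Qed.
Lemma rank2 (a : letter) : (2 <= rank a)%N -> is_U a.
Proof. by rewrite rankE; case: a => [[[]|[]]|[]]. Qed.

Lemma pos_case z (j : 'I_q) A l w1 (c : kind ell q -> F) k :
  pbw z -> z = A ++ l :: w1 -> br (f j) (vecl l) = \sum_k c k *: kvec k -> c k != 0 ->
  W (C z) (eval (inl (inl (j, 1%N)) :: A ++ mk k (letter_s l) :: w1)).
Proof.
move=> Hz Ez Hc ck.
have [Hw1 pl [HsA HpA] HrA Hrw] := split_facts Hz Ez.
set ej : letter := inl (inl (j, 1%N)).
set m := mk k (letter_s l).
have pm : posl m by rewrite /pos /m mk_s.
have [_ HFF _ HU2] := @bracket_types (inl (inr (j, 0%N))) l c k Hc ck.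
have [Hs1 Hsz1 Hp1 Hpp1 Hpz1] := pbw_parts Hw1.
case: (or3P (type_cases l)) => Hl.
-
  have HAE : all (@is_E ell q) A.
    by apply/allP => a /HrA; rewrite (rankE l) Hl => /rank0.
  have Pz : plus z = A ++ l :: plus w1.
    by rewrite Ez /pbw_plus filt_cons (all_filterP HAE) /= Hl.
  have Mz : minus z = minus w1.
    by rewrite Ez /pbw_minus filt_cons (filter_excl HAE (@EnF _ _)) /= (EnF Hl).
  have Zz : zero z = zero w1.
    by rewrite Ez /pbw_zero filt_cons (filter_excl HAE (@EnU _ _)) /= (EnU Hl).
  have HE1 : all (@is_E ell q) (ej :: A) by rewrite /= HAE.
  have Hp1' : all posl (ej :: A) by rewrite /= HpA.
  case: (or3P (type_cases m)) => Hm.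
  + have HE : all (@is_E ell q) ((ej :: A) ++ [:: m]) by rewrite all_cat HE1 /= Hm.
    have Hp : all posl ((ej :: A) ++ [:: m]) by rewrite all_cat Hp1' /= pm.
    have -> : ej :: A ++ m :: w1 = ((ej :: A) ++ [:: m]) ++ w1 by rewrite -catA.
    apply: Wmono (BSE HE Hp Hw1) => x' _ [H1 [H2 H3]].
    apply: K1_C; rewrite ?Mz ?Zz ?H2 ?H3 //.
    by apply: leq_trans H1 _; rewrite Pz !size_cat /= !addnS addn0 addSn.
  + rewrite -[ej :: A ++ m :: w1]/((ej :: A) ++ m :: w1) eval_cat.
    apply: (Wlin (@pre_lin _)) (Fmove Hw1 Hm pm) => x'' Hx'' G; rewrite -eval_cat.
    apply: Wmono (E_Good HE1 Hp1' Hx'' G) => x' _ G'; apply: Good_C.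
    by rewrite Pz Mz Zz size_cat /= addnS -addSn.
  + rewrite -[ej :: A ++ m :: w1]/((ej :: A) ++ m :: w1) eval_cat.
    apply: (Wlin (@pre_lin _)) (Umove Hw1 Hm pm) => x'' Hx'' G; rewrite -eval_cat.
    apply: Wmono (E_Good HE1 Hp1' Hx'' G) => x' _ G'; apply: Good_C.
    by rewrite Pz Mz Zz size_cat /= addnS -addSn.
-
  have HAnU : all (fun a => ~~ @is_U ell q a) A.
    by apply/allP => a /HrA; rewrite (rankE l) (FnE Hl) Hl => /rank1.
  have Hw1nE : plus w1 = [::].
    by apply: filter_nil => b /Hrw; rewrite (rankE l) (FnE Hl) Hl => /rank1' /negbTE.
  have ZA : zero A = [::] by apply: filter_nil => b /(allP HAnU) /negbTE.
  have SA : A = plus A ++ minus A by rewrite {1}(sorted_split HsA) ZA cats0.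
  have Sw := noE_split Hw1 Hw1nE.
  have Pz : plus z = plus A.
    by rewrite Ez /pbw_plus filt_cons /= (FnE Hl) -/(pbw_plus w1) Hw1nE cats0.
  have Mz : minus z = minus A ++ l :: minus w1.
    by rewrite Ez /pbw_minus filt_cons /= Hl.
  have Zz : zero z = zero w1.
    by rewrite Ez /pbw_zero filt_cons /= (FnU Hl) -/(pbw_zero A) ZA.
  have HmF : is_F m by rewrite /m is_F_mk; apply: HFF.
  have HF : all (@is_F ell q) (minus A ++ m :: minus w1) by rewrite all_cat all_minus /= HmF all_minus.
  have Hp : all posl (minus A ++ m :: minus w1).
    rewrite all_cat /= pm; apply/andP; split.
      by apply/allP => b; rewrite mem_filter => /andP[_ /(allP HpA)].
    by move: Hp1; rewrite all_cat => /andP[].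
  have -> : ej :: A ++ m :: w1 = (ej :: plus A) ++ ((minus A ++ m :: minus w1) ++ zero w1).
    by rewrite {1}SA {1}Sw /= -!catA.
  rewrite eval_cat.
  have Hsz0 : (0 < size (minus A ++ m :: minus w1))%N by rewrite size_cat /= addnS.
  apply: (Wlin (@pre_lin _)) (BSF HF Hp Hsz0 Hsz1 (all_zero w1) Hpz1) => x'' Hx'' [M' [Ex'' [HM' [HsM _]]]].
  rewrite -eval_cat.
  have HE1 : all (@is_E ell q) (ej :: plus A) by rewrite /= all_plus.
  have Hp1' : all posl (ej :: plus A).
    by rewrite /=; apply/allP => b; rewrite mem_filter => /andP[_ /(allP HpA)].
  have [Q1 Q2 Q3] := pmz_cat3 (E' := [::]) isT HM' (all_zero w1).
  rewrite /= -Ex'' in Q1 Q2 Q3.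
  apply: Wmono (BSE HE1 Hp1' Hx'') => x' _ [H1 [H2 H3]].
  apply: K1_C; first by rewrite Pz; apply: leq_trans H1 _; rewrite Q1 addn0.
    by rewrite H3 Q3 Zz.
  by move=> _; rewrite H2 Q2 -size_eq0 -lt0n.
-
  have Hw1U : all (@is_U ell q) w1.
    by apply/allP => b /Hrw; rewrite (rankE l) (UnE Hl) (UnF Hl) => /rank2.
  have SA := sorted_split HsA.
  have Pz : plus z = plus A.
    by rewrite Ez /pbw_plus filt_cons /= (UnE Hl) (filter_excl Hw1U (@UnE _ _)) cats0.
  have Mz : minus z = minus A.
    by rewrite Ez /pbw_minus filt_cons /= (UnF Hl) (filter_excl Hw1U (@UnF _ _)) cats0.
  have Zz : zero z = zero A ++ l :: w1.
    by rewrite Ez /pbw_zero filt_cons /= Hl (all_filterP Hw1U).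
  have Hk := HU2 Hl; rewrite /= in Hk.
  have HmF : is_F m by rewrite /m Hk.
  have -> : ej :: A ++ m :: w1 = (ej :: plus A) ++ (minus A ++ zero A ++ m :: w1).
    by rewrite {1}SA /= -!catA.
  rewrite eval_cat.
  have Mw : minus (minus A ++ zero A ++ m :: w1) = minus A ++ [:: m].
    rewrite /pbw_minus !filter_cat (all_filterP (all_minus A)) (filter_excl (all_zero A) (@UnF _ _)).
    by rewrite /= HmF (filter_excl Hw1U (@UnF _ _)).
  have Zw : zero (minus A ++ zero A ++ m :: w1) = zero A ++ w1.
    rewrite /pbw_zero !filter_cat (all_filterP (all_zero A)) (filter_excl (all_minus A) (@FnU _ _)).
    by rewrite /= (FnU HmF) (all_filterP Hw1U).
  have HFU : all FU (minus A ++ zero A ++ m :: w1).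
    rewrite !all_cat /= /FU HmF /=; apply/and3P; split.
    - by apply/allP => b /(allP (all_minus A)) ->.
    - by apply/allP => b /(allP (all_zero A)) ->; rewrite orbT.
    - by apply/allP => b /(allP Hw1U) ->; rewrite orbT.
  have HpAll : all posl (minus A ++ zero A ++ m :: w1).
    rewrite !all_cat /= pm; apply/and4P; split.
    - by apply/allP => b; rewrite mem_filter => /andP[_ /(allP HpA)].
    - by apply/allP => b; rewrite mem_filter => /andP[_ /(allP HpA)].
    - by [].
    - by case/andP: Hw1.
  have := @mixed_GS (minus A) (size (zero A) + size w1) _ HFU HpAll.
  rewrite Mw Zw sd_cat.
  have h1 : (sd (minus A) < sd (minus A) + sd [:: m])%N.
    by rewrite -{1}[sd (minus A)]addn0 ltn_add2l /sd /= addn0.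
  have h2 : (size (zero A ++ w1) <= size (zero A) + size w1)%N by rewrite size_cat.
  have h3 : minus A ++ [:: m] != [::] by rewrite -size_eq0 size_cat addn1.
  move=> /(_ h1 h2 h3) HW.
  apply: (Wlin (@pre_lin _)) HW => x'' Hx'' [HFU'' [Hsd [Hsz Hne]]]; rewrite -eval_cat.
  have HE1 : all (@is_E ell q) (ej :: plus A) by rewrite /= all_plus.
  have Hp1' : all posl (ej :: plus A).
    by rewrite /=; apply/allP => b; rewrite mem_filter => /andP[_ /(allP HpA)].
  have P0 : plus x'' = [::].
    by apply: (filter_excl HFU'') => b /orP[/FnE|/UnE].
  apply: Wmono (BSE HE1 Hp1' Hx'') => x' _ [H1 [H2 H3]].
  apply: K2_C.
  - by rewrite Pz; apply: leq_trans H1 _; rewrite P0 addn0.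
  - by rewrite Mz H2.
  - by rewrite H3 Zz size_cat /= addnS; apply: leq_trans Hsz _; apply: leqnSn.
  - by move=> _; rewrite H2.
Qed.

Lemma pre_add A v1 v2 : pre A (v1 + v2) = pre A v1 + pre A v2.
Proof. by have := pre_lin A 1 v1 v2; rewrite !scale1r. Qed.

Lemma termB_aux z (j : 'I_q) : pbw z -> forall w A, z = A ++ w ->
  W (C z) (act (e j) (-1) (pre A (act (f j) 0 (eval w)))).
Proof.
move=> Hz; elim=> [|l w1 IH] A Ez.
  by rewrite /= Hvac // pre0 act0v; apply: W0.
rewrite eval_cons comm0 pre_add actDv; apply: WD.
  have -> : pre A (act (vecl l) (letter_mode l) (act (f j) 0 (eval w1)))
          = pre (A ++ [:: l]) (act (f j) 0 (eval w1)) by rewrite /pre foldr_cat.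
  by apply: IH; rewrite Ez -catA.
case: (expand (br (f j) (vecl l))) => c Hc.
rewrite Hc act_sumg pre_sum act_sumv; apply: Wsum => k _.
rewrite actZg pre_scale actZv.
case: (eqVneq (c k) 0) => [->|ck]; first by rewrite scale0r; apply: W0.
apply: WZ.
have -> : act (kvec k) (letter_mode l) (eval w1) = eval (mk k (letter_s l) :: w1).
  by rewrite eval_cons vecl_mk /letter_mode mk_s.
rewrite -eval_cat.
have -> : act (e j) (-1) (eval (A ++ mk k (letter_s l) :: w1))
        = eval (inl (inl (j, 1%N)) :: A ++ mk k (letter_s l) :: w1) by [].
exact: pos_case Hz Ez Hc ck.
Qed.

Lemma main_lemma (hv : F) z : pbw z -> W (C z) (tildeL_m1 u e f act kk hv (eval z)).
Proof.
move=> Hz; rewrite /tildeL_m1; apply: WZ; apply: WD.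
  by apply: Wsum => i _; apply: termA.
by apply: Wsum => j _; exact: (@termB_aux z j Hz z [::] erefl).
Qed.
End Alg.

Unset Implicit Arguments.

Theorem lemma3p2 (R : realType) (ell q : nat) (g : vectType R[i])
    (br : g -> g -> g) (frm : g -> g -> R[i])
    (u : 'I_ell -> g) (e f : 'I_q -> g) (beta : 'I_q -> 'I_ell -> R[i])
    (hv k : R[i]) (V : lmodType R[i]) (vac : V) (act : g -> int -> V -> V) :
  simple_lie_setup br frm u e f beta ->
  dual_coxeter br u e f hv ->
  k + hv != 0 ->
  universal_affine_VA u e f vac act br frm k ->
  forall z : seq (letter ell q), pbw z ->
    pbw_lin_comb u e f vac act (lemma3p2_conditions z)
      (tildeL_m1 u e f act k hv (pbw_eval u e f vac act z)).
Proof.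
move=> [[Hsimple _] Hbasis [Huu Hue Huf Hnz] [Hpsys _]] _ _ [HactLg HactLv Hcomm Hvac _] z Hz.
have Hbr : is_lie_bracket br by case: Hsimple.
have Hchar : forall n : nat, (n%:R : R[i]) = 0 -> n = 0%N.
  by move=> n /eqP; rewrite Num.Theory.pnatr_eq0 => /eqP.
by apply: main_lemma; eassumption.
Qed.
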